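(* With the notation of the context, $$\|\mathrm T^{{\rm b},m}\|^2_{kk_1\to k_2k_3}\lesssim(N_2\wedge N_3)^{2-\alpha}N_1^{2-\alpha},\qquad \|\mathrm T^{{\rm b},m}\|^2_{kk_3\to k_1k_2}\lesssim(N_1\wedge N_2)^{2-\alpha}N_3^{2-\alpha},$$ $$\|\mathrm T^{{\rm b},m}\|^2_{kk_2\to k_1k_3}\lesssim(N_1\wedge N_3)^{1-\frac\alpha2}(N\wedge N_2)^{1-\frac\alpha2}.$$
   Context: Fix $\alpha\in(1,2)$, dyadic numbers $1\le N_1,N_2,N_3\le N$, a real number $m$ and a constant $C_0>0$. Let $S$ be the set of $(k,k_1,k_2,k_3)\in\mathbb Z^4$ with $k=k_1-k_2+k_3$, $k_2\notin\{k_1,k_3\}$, $\big||k_1|^\alpha-|k_2|^\alpha+|k_3|^\alpha-|k|^\alpha-m\big|\le C_0$, $|k|\le N$ and $|k_j|\le N_j$ for $j=1,2,3$. The base tensor is $\mathrm T^{{\rm b},m}_{kk_1k_2k_3}=\mathbf 1_S(k,k_1,k_2,k_3)$. For a tensor $H=H_{k_A}$ indexed by $k_A=(k_j)_{j\in A}\in\mathbb Z^A$ and a partition $(B,C)$ of $A$, $\|H\|_{k_B\to k_C}^2=\sup\{\sum_{k_C}|\sum_{k_B}H_{k_A}z_{k_B}|^2:\sum_{k_B}|z_{k_B}|^2=1\}$ (the $\ell^2_{k_B}\to\ell^2_{k_C}$ operator norm; for $C=\emptyset$ it is the $\ell^2_{k_A}$ norm). $a\wedge b=\min(a,b)$. $A\lesssim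 B$ means $A\le CB$ with $C$ depending only on $\alpha$ and $C_0$. *)

(* Defs.v *)
From Stdlib Require Import Reals ZArith List.
From Coquelicot Require Import Coquelicot.
Open Scope R_scope.

(* x^a for x >= 0, with the convention 0^a = 0 (Stdlib's Rpower 0 a = 1). *)
Definition rpow (x a : R) : R :=
  if Rlt_dec 0 x then Rpower x a else 0.

Definition zbox (M : nat) : list Z :=
  map (fun i => (Z.of_nat i - Z.of_nat M)%Z) (seq 0 (2 * M + 1)).

Definition zsum (l : list Z) (f : Z -> R) : R :=
  fold_right (fun x acc => f x + acc) 0 l.
Definition csum (l : list Z) (f : Z -> C) : C :=
  fold_right (fun x acc => Cplus (f x) acc) (RtoC 0) l.

Definition Tb (alpha C0 m : R) (N N1 N2 N3 : nat) (k k1 k2 k3 : Z) : R :=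
  if Z.eq_dec k (k1 - k2 + k3)%Z then
  if Z.eq_dec k2 k1 then 0 else
  if Z.eq_dec k2 k3 then 0 else
  if Rle_dec (Rabs (rpow (IZR (Z.abs k1)) alpha - rpow (IZR (Z.abs k2)) alpha
                    + rpow (IZR (Z.abs k3)) alpha - rpow (IZR (Z.abs k)) alpha - m)) C0 then
  if Z_le_dec (Z.abs k) (Z.of_nat N) then
  if Z_le_dec (Z.abs k1) (Z.of_nat N1) then
  if Z_le_dec (Z.abs k2) (Z.of_nat N2) then
  if Z_le_dec (Z.abs k3) (Z.of_nat N3) then 1 else 0 else 0 else 0 else 0
  else 0 else 0.

(* For a 4-index tensor H written as H b1 b2 c1 c2, and lists Lb1 Lb2 Lc1 Lc2
   containing its support in each index:
   opQ z = sum_{c1,c2} | sum_{b1,b2} H b1 b2 c1 c2 z(b1,b2) |^2. *)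
Definition opQ (H : Z -> Z -> Z -> Z -> R) (Lb1 Lb2 Lc1 Lc2 : list Z)
  (z : Z -> Z -> C) : R :=
  zsum Lc1 (fun c1 => zsum Lc2 (fun c2 =>
    (Cmod (csum Lb1 (fun b1 => csum Lb2 (fun b2 =>
        Cmult (RtoC (H b1 b2 c1 c2)) (z b1 b2))))) ^ 2)).

(* ||H||^2_{b1 b2 -> c1 c2} <= X, i.e. the supremum over (complex) z with
   ||z||_{l^2} = 1 of opQ z is at most X.  Only the values of z on the support
   box matter, so we quantify over z whose l^2 norm on the box is <= 1. *)
Definition opnorm2_le (H : Z -> Z -> Z -> Z -> R) (Lb1 Lb2 Lc1 Lc2 : list Z)
  (X : R) : Prop :=
  forall z : Z -> Z -> C,
    zsum Lb1 (fun b1 => zsum Lb2 (fun b2 => (Cmod (z b1 b2)) ^ 2)) <= 1 ->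
    opQ H Lb1 Lb2 Lc1 Lc2 z <= X.

(* Main.v *)
Require Import Defs.
From Stdlib Require Import Reals ZArith List Lra Lia.
From Coquelicot Require Import Coquelicot.
Open Scope R_scope.

Definition gsum {A : Type} (l : list A) (f : A -> R) : R :=
  fold_right (fun x acc => f x + acc) 0 l.
Definition gcsum {A : Type} (l : list A) (f : A -> C) : C :=
  fold_right (fun x acc => Cplus (f x) acc) (RtoC 0) l.

Lemma gsum_nil {A} (f : A -> R) : gsum nil f = 0. Proof. reflexivity. Qed.
Lemma gsum_cons {A} a l (f : A -> R) : gsum (a :: l) f = f a + gsum l f.
Proof. reflexivity. Qed.

Lemma gsum_app {A} (l1 l2 : list A) f : gsum (l1 ++ l2) f = gsum l1 f + gsum l2 f.
Proof. induction l1; simpl; [lra|]. unfold gsum in *; simpl. rewrite IHl1. lra. Qed.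

Lemma gsum_map {A B} (g : A -> B) l f : gsum (map g l) f = gsum l (fun x => f (g x)).
Proof. induction l; simpl; auto. unfold gsum in *; simpl; rewrite IHl; auto. Qed.

Lemma gsum_le {A} (l : list A) f g : (forall x, f x <= g x) -> gsum l f <= gsum l g.
Proof. intros H; induction l; unfold gsum in *; simpl; [lra|]. specialize (H a); lra. Qed.

Lemma gsum_ge0 {A} (l : list A) f : (forall x, 0 <= f x) -> 0 <= gsum l f.
Proof. intros H; induction l; unfold gsum in *; simpl; [lra|]. specialize (H a); lra. Qed.

Lemma gsum_plus {A} (l : list A) f g : gsum l (fun x => f x + g x) = gsum l f + gsum l g.
Proof. induction l; unfold gsum in *; simpl; [lra|]. rewrite IHl; lra. Qed.

Lemma gsum_scal {A} (l : list A) c f : gsum l (fun x => c * f x) = c * gsum l f.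
Proof. induction l; unfold gsum in *; simpl; [lra|]. rewrite IHl; lra. Qed.

Lemma gsum_ext {A} (l : list A) f g : (forall x, f x = g x) -> gsum l f = gsum l g.
Proof. intros H; induction l; unfold gsum in *; simpl; auto. rewrite H, IHl; auto. Qed.

Lemma gsum_swap {A B} (l1 : list A) (l2 : list B) f :
  gsum l1 (fun a => gsum l2 (fun b => f a b)) = gsum l2 (fun b => gsum l1 (fun a => f a b)).
Proof.
  induction l1.
  - unfold gsum at 1; simpl. symmetry. induction l2; unfold gsum in *; simpl in *; lra.
  - rewrite gsum_cons, IHl1. rewrite <- gsum_plus. apply gsum_ext. intros; rewrite gsum_cons; auto.
Qed.

Lemma gsum_prod {A B} (l1 : list A) (l2 : list B) f :
  gsum l1 (fun a => gsum l2 (fun b => f a b)) = gsum (list_prod l1 l2) (fun p => f (fst p) (snd p)).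
Proof.
  induction l1; [reflexivity|].
  simpl list_prod. rewrite gsum_app, gsum_map, gsum_cons, IHl1. simpl. auto.
Qed.

Lemma gcsum_app {A} (l1 l2 : list A) f : gcsum (l1 ++ l2) f = Cplus (gcsum l1 f) (gcsum l2 f).
Proof. induction l1; simpl. { unfold gcsum; simpl. rewrite Cplus_0_l; auto. }
  unfold gcsum in *; simpl. rewrite IHl1. rewrite Cplus_assoc; auto. Qed.

Lemma gcsum_map {A B} (g : A -> B) l f : gcsum (map g l) f = gcsum l (fun x => f (g x)).
Proof. induction l; simpl; auto. unfold gcsum in *; simpl; rewrite IHl; auto. Qed.

Lemma gcsum_prod {A B} (l1 : list A) (l2 : list B) f :
  gcsum l1 (fun a => gcsum l2 (fun b => f a b)) = gcsum (list_prod l1 l2) (fun p => f (fst p) (snd p)).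
Proof.
  induction l1; [reflexivity|].
  simpl list_prod. rewrite gcsum_app, gcsum_map, <- IHl1. simpl. auto.
Qed.

Lemma gcsum_Cmod {A} (l : list A) (h : A -> R) (z : A -> C) :
  (forall x, 0 <= h x) ->
  Cmod (gcsum l (fun b => Cmult (RtoC (h b)) (z b))) <= gsum l (fun b => h b * Cmod (z b)).
Proof.
  intros H; induction l; unfold gcsum, gsum in *; simpl.
  - rewrite Cmod_0; lra.
  - eapply Rle_trans; [apply Cmod_triangle|]. rewrite Cmod_mult, Cmod_R, Rabs_pos_eq by auto. lra.
Qed.

Lemma gsum_quad {A} (l : list A) h a t :
  gsum l (fun b => h b * (a b - t)^2) =
  gsum l (fun b => h b * (a b)^2) - 2 * t * gsum l (fun b => h b * a b) + t^2 * gsum l h.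
Proof. induction l; [unfold gsum; simpl; ring|]. rewrite !gsum_cons, IHl. ring. Qed.

Lemma wCS {A} (l : list A) h a : (forall x, 0 <= h x) ->
  (gsum l (fun b => h b * a b))^2 <= gsum l h * gsum l (fun b => h b * (a b)^2).
Proof.
  intros H.
  set (S0 := gsum l h). set (S1 := gsum l (fun b => h b * a b)).
  set (S2 := gsum l (fun b => h b * (a b)^2)).
  assert (Q : forall t, 0 <= S2 - 2 * t * S1 + t^2 * S0).
  { intros t. unfold S0, S1, S2. rewrite <- gsum_quad. apply gsum_ge0. intros x.
    apply Rmult_le_pos; auto. apply pow2_ge_0. }
  assert (H0 : 0 <= S0) by (apply gsum_ge0; auto).
  destruct (Req_dec S0 0) as [E|E].
  - destruct (Req_dec S1 0) as [E1|E1].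
    + rewrite E1, E. lra.
    + specialize (Q ((S2 + 1) / (2 * S1))). rewrite E in Q.
      replace (S2 - 2 * ((S2 + 1) / (2 * S1)) * S1 + ((S2 + 1) / (2 * S1)) ^ 2 * 0) with (-1) in Q
        by (field; auto). lra.
  - specialize (Q (S1 / S0)).
    replace (S2 - 2 * (S1 / S0) * S1 + (S1 / S0) ^ 2 * S0) with ((S0 * S2 - S1^2) / S0) in Q by (field; auto).
    assert (0 < S0) by lra.
    assert (0 <= S0 * S2 - S1^2).
    { apply (Rmult_le_reg_r (/ S0)). apply Rinv_0_lt_compat; auto. rewrite Rmult_0_l. exact Q. }
    lra.
Qed.

Lemma schur_g {B Cc : Type} (Lb : list B) (Lc : list Cc) (H : B -> Cc -> R) (z : B -> C) R0 Q0 :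
  (forall b c, 0 <= H b c) -> 0 <= R0 -> 0 <= Q0 ->
  (forall b, gsum Lc (fun c => H b c) <= R0) ->
  (forall c, gsum Lb (fun b => H b c) <= Q0) ->
  gsum Lb (fun b => (Cmod (z b))^2) <= 1 ->
  gsum Lc (fun c => (Cmod (gcsum Lb (fun b => Cmult (RtoC (H b c)) (z b))))^2) <= R0 * Q0.
Proof.
  intros Hpos HR HQ Hrow Hcol Hz.
  apply Rle_trans with (gsum Lc (fun c => Q0 * gsum Lb (fun b => H b c * (Cmod (z b))^2))).
  { apply gsum_le. intros c.
    assert (A1 := gcsum_Cmod Lb (fun b => H b c) z (fun b => Hpos b c)).
    assert (A0 : 0 <= Cmod (gcsum Lb (fun b => Cmult (RtoC (H b c)) (z b)))) by apply Cmod_ge_0.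
    assert (A2 := wCS Lb (fun b => H b c) (fun b => Cmod (z b)) (fun b => Hpos b c)).
    simpl in A2.
    assert (A3 : 0 <= gsum Lb (fun b => H b c * Cmod (z b) ^ 2)).
    { apply gsum_ge0; intros; apply Rmult_le_pos; auto; apply pow2_ge_0. }
    specialize (Hcol c).
    apply Rle_trans with ((gsum Lb (fun b => H b c * Cmod (z b)))^2).
    { apply pow_incr; auto. }
    eapply Rle_trans; [exact A2|]. apply Rmult_le_compat_r; auto. }
  rewrite gsum_scal, gsum_swap.
  apply Rle_trans with (Q0 * gsum Lb (fun b => R0 * (Cmod (z b))^2)).
  { apply Rmult_le_compat_l; auto. apply gsum_le. intros b.
    rewrite <- (gsum_ext Lc (fun c => (Cmod (z b))^2 * H b c)) by (intros; ring).
    rewrite gsum_scal. rewrite Rmult_comm. apply Rmult_le_compat_r; auto. apply pow2_ge_0. }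
  rewrite gsum_scal. replace (R0 * Q0) with (Q0 * R0 * 1) by ring.
  rewrite <- Rmult_assoc. apply Rmult_le_compat_l; auto. apply Rmult_le_pos; auto.
Qed.

Lemma schur (H : Z -> Z -> Z -> Z -> R) Lb1 Lb2 Lc1 Lc2 R0 Q0 :
  (forall a b c d, 0 <= H a b c d) -> 0 <= R0 -> 0 <= Q0 ->
  (forall b1 b2, zsum Lc1 (fun c1 => zsum Lc2 (fun c2 => H b1 b2 c1 c2)) <= R0) ->
  (forall c1 c2, zsum Lb1 (fun b1 => zsum Lb2 (fun b2 => H b1 b2 c1 c2)) <= Q0) ->
  opnorm2_le H Lb1 Lb2 Lc1 Lc2 (R0 * Q0).
Proof.
  intros Hp HR HQ Hrow Hcol z Hz. unfold opQ.
  change (gsum Lc1 (fun c1 => gsum Lc2 (fun c2 =>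
     Cmod (gcsum Lb1 (fun b1 => gcsum Lb2 (fun b2 => Cmult (RtoC (H b1 b2 c1 c2)) (z b1 b2)))) ^ 2))
     <= R0 * Q0).
  rewrite gsum_prod.
  erewrite gsum_ext; [| intros p; rewrite gcsum_prod; reflexivity].
  apply (schur_g (list_prod Lb1 Lb2) (list_prod Lc1 Lc2)
           (fun b c => H (fst b) (snd b) (fst c) (snd c)) (fun b => z (fst b) (snd b))); auto.
  - intros b. rewrite <- (gsum_prod Lc1 Lc2 (fun c1 c2 => H (fst b) (snd b) c1 c2)). apply Hrow.
  - intros c. rewrite <- (gsum_prod Lb1 Lb2 (fun b1 b2 => H b1 b2 (fst c) (snd c))). apply Hcol.
  - rewrite <- (gsum_prod Lb1 Lb2 (fun b1 b2 => Cmod (z b1 b2) ^ 2)). exact Hz.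
Qed.

Lemma zbox_NoDup M : NoDup (zbox M).
Proof.
  unfold zbox. apply NoDup_map_NoDup_ForallPairs; [|apply seq_NoDup].
  intros a b _ _ E. lia.
Qed.

Definition zrange (a : Z) (n : nat) : list Z := map (fun i => (a + Z.of_nat i)%Z) (seq 0 (S n)).

Lemma zrange_len a n : length (zrange a n) = S n.
Proof. unfold zrange. rewrite length_map, length_seq. auto. Qed.

Lemma zrange_in a n x : (a <= x <= a + Z.of_nat n)%Z -> In x (zrange a n).
Proof.
  intros H. unfold zrange. apply in_map_iff. exists (Z.to_nat (x - a)). split.
  - lia.
  - apply in_seq. lia.
Qed.

Lemma list_min (l : list Z) : l <> nil -> exists m, In m l /\ forall y, In y l -> (m <= y)%Z.
Proof.
  induction l as [|a l IH]; intros H; [congruence|].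
  destruct l as [|b l'].
  - exists a. split; [left; auto|]. intros y [<-|[]]; lia.
  - destruct IH as [m [Hm Hm']]; [congruence|].
    destruct (Z_le_dec a m).
    + exists a. split; [left; auto|]. intros y [<-|Hy]; [lia|]. specialize (Hm' y Hy); lia.
    + exists m. split; [right; auto|]. intros y [<-|Hy]; [lia|]. auto.
Qed.

Lemma list_max (l : list Z) : l <> nil -> exists m, In m l /\ forall y, In y l -> (y <= m)%Z.
Proof.
  induction l as [|a l IH]; intros H; [congruence|].
  destruct l as [|b l'].
  - exists a. split; [left; auto|]. intros y [<-|[]]; lia.
  - destruct IH as [m [Hm Hm']]; [congruence|].
    destruct (Z_le_dec m a).
    + exists a. split; [left; auto|]. intros y [<-|Hy]; [lia|]. specialize (Hm' y Hy); lia.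
    + exists m. split; [right; auto|]. intros y [<-|Hy]; [lia|]. auto.
Qed.

Lemma length_filter_split {A} (p : A -> bool) l :
  length l = (length (filter p l) + length (filter (fun x => negb (p x)) l))%nat.
Proof. induction l; simpl; auto. destruct (p a); simpl; lia. Qed.

Definition posb (f : Z -> R) (x : Z) : bool := if Rlt_dec 0 (f x) then true else false.

Lemma gsum_ind_le (l : list Z) f : (forall x, 0 <= f x <= 1) ->
  gsum l f <= INR (length (filter (posb f) l)).
Proof.
  intros H. induction l; [unfold gsum; simpl; lra|].
  rewrite gsum_cons. simpl. unfold posb at 1. destruct (Rlt_dec 0 (f a)).
  - simpl length. rewrite S_INR. specialize (H a). lra.
  - specialize (H a). lra.
Qed.

Lemma incl_len_bound (l : list Z) a n : NoDup l -> (forall x, In x l -> (a <= x <= a + Z.of_nat n)%Z) ->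
  (length l <= S n)%nat.
Proof.
  intros ND H. rewrite <- (zrange_len a n). apply NoDup_incl_length; auto.
  intros x Hx. apply zrange_in; auto.
Qed.

Lemma count3 (l : list Z) (f : Z -> R) (L : nat) (P : Z -> Prop) :
  NoDup l -> (forall x, 0 <= f x <= 1) -> (forall x, 0 < f x -> P x) ->
  (forall x y w, P x -> P y -> P w -> (x < y < w)%Z -> (y - x > Z.of_nat L)%Z ->
       (w - y > Z.of_nat L)%Z -> False) ->
  gsum l f <= 2 * INR L + 2.
Proof.
  intros ND Hf HP H3.
  eapply Rle_trans; [apply gsum_ind_le; auto|].
  set (lf := filter (posb f) l).
  assert (NDf : NoDup lf) by (apply NoDup_filter; auto).
  assert (Pf : forall x, In x lf -> P x).
  { intros x Hx. apply filter_In in Hx. destruct Hx as [_ Hx]. unfold posb in Hx.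
    destruct (Rlt_dec 0 (f x)); [auto|discriminate]. }
  destruct lf as [|a0 l0] eqn:E.
  { simpl. pose proof (pos_INR L). lra. }
  rewrite <- E in *.
  destruct (list_min lf) as [m [Hm Hm']]; [rewrite E; congruence|].
  destruct (list_max lf) as [M [HM HM']]; [rewrite E; congruence|].
  set (q := fun x => (x - m <=? Z.of_nat L)%Z).
  rewrite (length_filter_split q).
  assert (A1 : (length (filter q lf) <= S L)%nat).
  { apply incl_len_bound with m. apply NoDup_filter; auto.
    intros x Hx. apply filter_In in Hx. destruct Hx as [Hx Hq]. unfold q in Hq.
    apply Z.leb_le in Hq. specialize (Hm' x Hx). lia. }
  assert (A2 : (length (filter (fun x => negb (q x)) lf) <= S L)%nat).
  { apply incl_len_bound with (M - Z.of_nat L)%Z. apply NoDup_filter; auto.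
    intros x Hx. apply filter_In in Hx. destruct Hx as [Hx Hq]. unfold q in Hq.
    apply Bool.negb_true_iff in Hq. apply Z.leb_gt in Hq.
    specialize (HM' x Hx).
    destruct (Z_le_dec (M - x) (Z.of_nat L)); [lia|].
    exfalso. apply (H3 m x M); auto; lia. }
  rewrite plus_INR.
  apply le_INR in A1. apply le_INR in A2. rewrite S_INR in A1, A2. lra.
Qed.

Lemma gsum_single (l : list Z) f y0 : NoDup l -> (forall y, y <> y0 -> f y = 0) ->
  (forall y, 0 <= f y) -> gsum l f <= f y0.
Proof.
  intros ND H0 Hp. induction l as [|a l IH]; [unfold gsum; simpl; auto|].
  rewrite gsum_cons. inversion ND as [|a' l' Hnin ND']; subst.
  destruct (Z.eq_dec a y0).
  - subst. assert (gsum l f = 0).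
    { clear IH ND. induction l as [|b l IH2]; [reflexivity|].
      rewrite gsum_cons. rewrite H0. rewrite IH2; [lra| |].
      + intros Hc; apply Hnin; right; auto.
      + inversion ND'; auto.
      + intros Hc; subst; apply Hnin; left; auto. }
    lra.
  - rewrite H0 by auto. rewrite Rplus_0_l. apply IH. auto.
Qed.

Definition phi (a x : R) : R := rpow (Rabs x) a.
Definition psi (a x : R) : R := if Rle_dec 0 x then rpow x (a - 1) else - rpow (- x) (a - 1).

Lemma rpow_pos x a : 0 < x -> rpow x a = Rpower x a.
Proof. intros H; unfold rpow; destruct (Rlt_dec 0 x); [auto|lra]. Qed.
Lemma rpow_0 a : rpow 0 a = 0.
Proof. unfold rpow; destruct (Rlt_dec 0 0); [lra|auto]. Qed.
Lemma Rpower_pos x a : 0 < Rpower x a.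
Proof. unfold Rpower; apply exp_pos. Qed.
Lemma rpow_ge0 x a : 0 <= rpow x a.
Proof. unfold rpow; destruct (Rlt_dec 0 x); [left; apply Rpower_pos|lra]. Qed.

Lemma Rpower_base_lt a b c : 0 < a < b -> 0 < c -> Rpower a c < Rpower b c.
Proof.
  intros [Ha Hb] Hc. unfold Rpower. apply exp_increasing.
  apply Rmult_lt_compat_l; auto. apply ln_increasing; auto.
Qed.

Lemma Rpower_base_le_neg a b c : 0 < a <= b -> c <= 0 -> Rpower b c <= Rpower a c.
Proof.
  intros [Ha Hb] Hc.
  assert (E1 : Rpower b c = / Rpower b (- c)) by (rewrite <- Rpower_Ropp, Ropp_involutive; auto).
  assert (E2 : Rpower a c = / Rpower a (- c)) by (rewrite <- Rpower_Ropp, Ropp_involutive; auto).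
  rewrite E1, E2.
  apply Rinv_le_contravar. apply Rpower_pos. apply Rle_Rpower_l; [lra|lra].
Qed.

Lemma Rpower_split x e : 0 < x -> Rpower x e = x * Rpower x (e - 1).
Proof.
  intros H. replace e with (1 + (e - 1)) at 1 by ring. rewrite Rpower_plus, Rpower_1; auto.
Qed.

Lemma dlim_loc f g x l : derivable_pt_lim f x l ->
  (exists d, 0 < d /\ forall y, Rabs (y - x) < d -> f y = g y) -> derivable_pt_lim g x l.
Proof.
  intros Hf [d [Hd Hfg]] eps He. destruct (Hf eps He) as [del Hdel].
  assert (Hm : 0 < Rmin del d) by (apply Rmin_pos; [apply cond_pos|auto]).
  exists (mkposreal _ Hm). intros h Hh Hhl. simpl in Hhl.
  rewrite <- !Hfg. apply Hdel; auto. apply Rlt_le_trans with (Rmin del d); auto; apply Rmin_l.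
  - rewrite Rminus_diag, Rabs_R0; auto.
  - replace (x + h - x) with h by ring. apply Rlt_le_trans with (Rmin del d); auto; apply Rmin_r.
Qed.

Lemma dlim_ext f g x l : derivable_pt_lim f x l -> (forall y, f y = g y) -> derivable_pt_lim g x l.
Proof. intros H E. apply dlim_loc with f; auto. exists 1; split; [lra|auto]. Qed.

Lemma phi_deriv a x : 1 < a -> derivable_pt_lim (phi a) x (a * psi a x).
Proof.
  intros Ha. destruct (Rtotal_order x 0) as [Hx|[Hx|Hx]].
  -
    assert (D := derivable_pt_lim_comp (fun y => - y) (fun y => Rpower y a) x (-1) (a * Rpower (- x) (a - 1))).
    apply dlim_loc with (comp (fun y => Rpower y a) (fun y => - y)).
    + unfold psi. destruct (Rle_dec 0 x); [lra|]. rewrite rpow_pos by lra.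
      replace (a * - Rpower (- x) (a - 1)) with (a * Rpower (- x) (a - 1) * -1) by ring.
      apply D.
      * apply dlim_ext with (- id)%F. apply derivable_pt_lim_opp, derivable_pt_lim_id.
        intros; reflexivity.
      * apply derivable_pt_lim_power. lra.
    + exists (- x). split; [lra|]. intros y Hy. unfold comp, phi.
      rewrite Rabs_left by (apply Rabs_def2 in Hy; lra). rewrite rpow_pos; auto.
      apply Rabs_def2 in Hy; lra.
  -
    subst x. unfold psi. destruct (Rle_dec 0 0); [|lra]. rewrite rpow_0, Rmult_0_r.
    intros eps He.
    assert (Hd : 0 < Rpower eps (/ (a - 1))) by apply Rpower_pos.
    exists (mkposreal _ Hd). intros h Hh Hhl. simpl in Hhl.
    unfold phi. rewrite Rplus_0_l, Rabs_R0, rpow_0, Rminus_0_r, Rminus_0_r.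
    assert (Hh' : 0 < Rabs h) by (apply Rabs_pos_lt; auto).
    rewrite rpow_pos by auto.
    unfold Rdiv; rewrite Rabs_mult, Rabs_inv. rewrite (Rabs_pos_eq (Rpower _ _)) by (left; apply Rpower_pos).
    rewrite (Rpower_split (Rabs h) a) by auto.
    replace (Rabs h * Rpower (Rabs h) (a - 1) * / Rabs h) with (Rpower (Rabs h) (a - 1)) by (field; lra).
    replace eps with (Rpower (Rpower eps (/ (a - 1))) (a - 1)).
    + apply Rpower_base_lt; [split; auto|lra].
    + rewrite Rpower_mult. replace (/ (a - 1) * (a - 1)) with 1 by (field; lra). apply Rpower_1; auto.
  -
    apply dlim_loc with (fun y => Rpower y a).
    + unfold psi. destruct (Rle_dec 0 x); [|lra]. rewrite rpow_pos by lra.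
      apply derivable_pt_lim_power; auto.
    + exists x. split; [lra|]. intros y Hy. apply Rabs_def2 in Hy. unfold phi.
      rewrite Rabs_pos_eq by lra. rewrite rpow_pos; auto; lra.
Qed.

Lemma psi_odd a x : psi a (- x) = - psi a x.
Proof.
  unfold psi. destruct (Rle_dec 0 (- x)), (Rle_dec 0 x).
  - assert (x = 0) by lra. subst. rewrite Ropp_0, rpow_0. ring.
  - rewrite Ropp_involutive. auto.
  - rewrite Ropp_involutive. ring.
  - lra.
Qed.

Lemma psi_pos_case a u v : 1 < a < 2 -> 0 <= u < v ->
  psi a v - psi a u >= (a - 1) / 2 * (v - u) * Rpower v (a - 2).
Proof.
  intros Ha Huv. unfold psi. destruct (Rle_dec 0 v); [|lra]. destruct (Rle_dec 0 u); [|lra].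
  rewrite (rpow_pos v) by lra.
  destruct (Req_dec u 0) as [E|E].
  - subst u. rewrite rpow_0. rewrite (Rpower_split v (a - 1)) by lra.
    replace (a - 1 - 1) with (a - 2) by ring.
    assert (0 < Rpower v (a - 2)) by apply Rpower_pos.
    assert (v * Rpower v (a - 2) * ((a - 1) / 2) <= v * Rpower v (a - 2) * 1).
    { apply Rmult_le_compat_l. apply Rmult_le_pos; lra. lra. }
    nra.
  - rewrite rpow_pos by lra.
    destruct (MVT_cor2 (fun y => Rpower y (a - 1)) (fun y => (a - 1) * Rpower y (a - 1 - 1)) u v)
      as [c [Hc Hc2]]; [lra| |].
    + intros c Hc. apply derivable_pt_lim_power. lra.
    + rewrite Hc. replace (a - 1 - 1) with (a - 2) by ring.
      assert (Rpower v (a - 2) <= Rpower c (a - 2)) by (apply Rpower_base_le_neg; lra).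
      assert (0 < Rpower v (a - 2)) by apply Rpower_pos.
      assert (0 <= ((a-1)*(v-u)) * (Rpower c (a-2) - Rpower v (a-2)/2)) by (apply Rmult_le_pos; nra). nra.
Qed.

Lemma psi_lower a u v : 1 < a < 2 -> u < v ->
  psi a v - psi a u >= (a - 1) / 2 * (v - u) * Rpower (Rmax (Rabs u) (Rabs v)) (a - 2).
Proof.
  intros Ha Huv.
  destruct (Rle_dec 0 u) as [Hu|Hu].
  - rewrite Rabs_pos_eq by lra. rewrite Rabs_pos_eq by lra. rewrite Rmax_right by lra.
    apply psi_pos_case; lra.
  - destruct (Rle_dec v 0) as [Hv|Hv].
    + rewrite (Rabs_left u) by lra. rewrite (Rabs_left1 v) by lra. rewrite Rmax_left by lra.
      replace (psi a v - psi a u) with (psi a (- u) - psi a (- v))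
        by (rewrite !psi_odd; ring).
      replace (v - u) with (- u - - v) by ring. apply psi_pos_case; lra.
    + rewrite (Rabs_left u) by lra. rewrite (Rabs_pos_eq v) by lra.
      unfold psi. destruct (Rle_dec 0 v); [|lra]. destruct (Rle_dec 0 u); [lra|].
      rewrite !rpow_pos by lra.
      set (mx := Rmax (- u) v).
      assert (Hmx1 : - u <= mx) by apply Rmax_l. assert (Hmx2 : v <= mx) by apply Rmax_r.
      assert (Hmx3 : mx = - u \/ mx = v) by (unfold mx, Rmax; destruct (Rle_dec (- u) v); auto).
      assert (Hp1 : 0 < Rpower v (a - 1)) by apply Rpower_pos.
      assert (Hp2 : 0 < Rpower (- u) (a - 1)) by apply Rpower_pos.
      assert (Hm : Rpower mx (a - 1) <= Rpower v (a - 1) + Rpower (- u) (a - 1))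
        by (destruct Hmx3 as [E|E]; rewrite E; lra).
      rewrite (Rpower_split mx) in Hm by lra. replace (a - 1 - 1) with (a - 2) in Hm by ring.
      assert (0 < Rpower mx (a - 2)) by apply Rpower_pos.
      assert ((a - 1) / 2 * (v - u) * Rpower mx (a - 2) <= mx * Rpower mx (a - 2)).
      { apply Rmult_le_compat_r; [lra|]. nra. }
      lra.
Qed.

Lemma absb t A : Rabs t <= A <-> - A <= t <= A.
Proof. unfold Rabs; destruct (Rcase_abs t); split; intros; lra. Qed.

Lemma Rpower_mult_distr x y e : 0 < x -> 0 < y -> Rpower (x * y) e = Rpower x e * Rpower y e.
Proof. intros; unfold Rpower. rewrite ln_mult by auto. rewrite <- exp_plus. f_equal; ring. Qed.

Lemma Rpower_ge1 x e : 1 <= x -> 0 <= e -> 1 <= Rpower x e.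
Proof. intros. rewrite <- (Rpower_O x) by lra. apply Rle_Rpower; auto. Qed.

Lemma Rpower_le1 x e : 1 <= x -> e <= 0 -> Rpower x e <= 1.
Proof. intros. replace 1 with (Rpower x 0) by (apply Rpower_O; lra). apply Rle_Rpower; auto. Qed.

Lemma key_DM a d M mx : 1 < a < 2 -> 1 <= d -> 1 <= M -> 0 < mx -> mx <= M + d ->
  Rpower 2 (a - 2) * Rpower M (a - 2) <= d * Rpower mx (a - 2).
Proof.
  intros Ha Hd HM Hmx Hle.
  assert (P2 : 0 < Rpower 2 (a - 2)) by apply Rpower_pos.
  assert (PM : 0 < Rpower M (a - 2)) by apply Rpower_pos.
  assert (Pmx : 0 < Rpower mx (a - 2)) by apply Rpower_pos.
  destruct (Rle_dec d M).
  - assert (Rpower (2 * M) (a - 2) <= Rpower mx (a - 2)) by (apply Rpower_base_le_neg; lra).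
    rewrite Rpower_mult_distr in H by lra. nra.
  - assert (Rpower (2 * d) (a - 2) <= Rpower mx (a - 2)) by (apply Rpower_base_le_neg; lra).
    rewrite Rpower_mult_distr in H by lra.
    assert (E : d * Rpower d (a - 2) = Rpower d (a - 1)).
    { rewrite (Rpower_split d (a - 1)) by lra. f_equal. f_equal. ring. }
    assert (1 <= Rpower d (a - 1)) by (apply Rpower_ge1; lra).
    assert (Rpower M (a - 2) <= 1) by (apply Rpower_le1; lra).
    assert (d * (Rpower 2 (a - 2) * Rpower d (a - 2)) <= d * Rpower mx (a - 2))
      by (apply Rmult_le_compat_l; lra).
    nra.
Qed.

Lemma psi_absdiff a t D : 1 < a < 2 -> D <> 0 ->
  (a - 1) / 2 * Rabs D * Rpower (Rmax (Rabs t) (Rabs (t + D))) (a - 2)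
  <= Rabs (psi a (t + D) - psi a t).
Proof.
  intros Ha HD. destruct (Rlt_dec 0 D).
  - assert (H := psi_lower a t (t + D) Ha ltac:(lra)).
    rewrite Rabs_pos_eq by lra. rewrite (Rabs_pos_eq (_ - _)).
    + replace (t + D - t) with D in H by ring. lra.
    + assert (0 < Rpower (Rmax (Rabs t) (Rabs (t + D))) (a - 2)) by apply Rpower_pos.
      assert (0 <= (a - 1) / 2 * D * Rpower (Rmax (Rabs t) (Rabs (t + D))) (a - 2))
        by (apply Rmult_le_pos; [apply Rmult_le_pos|]; lra). lra.
  - assert (H := psi_lower a (t + D) t Ha ltac:(lra)).
    rewrite Rmax_comm. rewrite Rabs_left by lra. rewrite Rabs_minus_sym.
    rewrite (Rabs_pos_eq (_ - _)).
    + replace (t - (t + D)) with (- D) in H by ring. lra.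
    + assert (0 < Rpower (Rmax (Rabs (t + D)) (Rabs t)) (a - 2)) by apply Rpower_pos.
      assert (0 <= (a - 1) / 2 * (- D) * Rpower (Rmax (Rabs (t + D)) (Rabs t)) (a - 2))
        by (apply Rmult_le_pos; [apply Rmult_le_pos|]; lra). lra.
Qed.

Lemma g_deriv a D c : 1 < a ->
  derivable_pt_lim (fun t => phi a (t + D) - phi a t) c (a * psi a (c + D) - a * psi a c).
Proof.
  intros Ha.
  apply dlim_ext with (comp (phi a) (fun t => (t + D)%R) - phi a)%F; [|intros; reflexivity].
  apply derivable_pt_lim_minus; [|apply phi_deriv; auto].
  replace (a * psi a (c + D)) with (a * psi a (c + D) * 1) by ring.
  apply derivable_pt_lim_comp; [|apply phi_deriv; auto].
  apply dlim_ext with (id + fct_cte D)%F; [|intros; reflexivity].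
  replace 1 with (1 + 0) by ring. apply derivable_pt_lim_plus.
  apply derivable_pt_lim_id. apply derivable_pt_lim_const.
Qed.

Definition lamG (a : R) := a * (a - 1) / 2 * Rpower 2 (a - 2).

Lemma gapG a x y D A B M : 1 < a < 2 -> x < y -> 1 <= Rabs D -> 1 <= M -> (A <= M \/ B <= M) ->
  Rabs x <= A -> Rabs y <= A -> Rabs (x + D) <= B -> Rabs (y + D) <= B ->
  lamG a * Rpower M (a - 2) * (y - x) <=
  Rabs ((phi a (y + D) - phi a y) - (phi a (x + D) - phi a x)).
Proof.
  intros Ha Hxy HD HM HAB Hx Hy HxD HyD.
  destruct (MVT_cor2 (fun t => phi a (t + D) - phi a t) (fun t => a * psi a (t + D) - a * psi a t) x y)
    as [c [Hc Hc2]]; auto.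
  { intros; apply g_deriv; lra. }
  rewrite Hc. rewrite Rabs_mult. rewrite (Rabs_pos_eq (y - x)) by lra.
  apply Rmult_le_compat_r; [lra|].
  replace (a * psi a (c + D) - a * psi a c) with (a * (psi a (c + D) - psi a c)) by ring.
  rewrite Rabs_mult, (Rabs_pos_eq a) by lra.
  assert (HD0 : D <> 0) by (intro E; rewrite E, Rabs_R0 in HD; lra).
  assert (K1 := psi_absdiff a c D Ha HD0).
  apply absb in Hx. apply absb in Hy. apply absb in HxD. apply absb in HyD.
  assert (Hc' : Rabs c <= A) by (apply absb; lra).
  assert (HcD : Rabs (c + D) <= B) by (apply absb; lra).
  set (mx := Rmax (Rabs c) (Rabs (c + D))) in *.
  assert (Hmx0 : 0 < mx).
  { unfold mx. destruct (Req_dec c 0).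
    - subst c. rewrite Rplus_0_l. apply Rlt_le_trans with (Rabs D); [lra|apply Rmax_r].
    - apply Rlt_le_trans with (Rabs c); [apply Rabs_pos_lt; auto|apply Rmax_l]. }
  assert (Hmx1 : mx <= M + Rabs D).
  { unfold mx. assert (T1 := Rabs_triang c D).
    assert (T2 := Rabs_triang (c + D) (- D)). rewrite Rabs_Ropp in T2.
    replace (c + D + - D) with c in T2 by ring.
    apply Rmax_lub; lra. }
  assert (K2 := key_DM a (Rabs D) M mx Ha HD HM Hmx0 Hmx1).
  unfold lamG.
  assert (0 <= a * ((a - 1) / 2)) by nra.
  apply Rle_trans with (a * ((a - 1) / 2) * (Rabs D * Rpower mx (a - 2))).
  { replace (a * (a - 1) / 2 * Rpower 2 (a - 2) * Rpower M (a - 2)) with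
       (a * ((a - 1) / 2) * (Rpower 2 (a - 2) * Rpower M (a - 2))) by (field; lra).
    apply Rmult_le_compat_l; auto. }
  replace (a * ((a - 1) / 2) * (Rabs D * Rpower mx (a - 2))) with
      (a * ((a - 1) / 2 * Rabs D * Rpower mx (a - 2))) by ring.
  apply Rmult_le_compat_l; lra.
Qed.

Definition lamH (a : R) := a * (a - 1) / 2.

Lemma h_deriv a s lam c : 1 < a ->
  derivable_pt_lim (fun t => phi a t + phi a (s - t) - lam / 2 * (t * t)) c
     (a * psi a c - a * psi a (s - c) - lam * c).
Proof.
  intros Ha.
  apply dlim_ext with (phi a + comp (phi a) (fun t => (s - t)%R) - mult_real_fct (lam / 2)%R (id * id))%F;
    [|intros; reflexivity].
  replace (a * psi a c - a * psi a (s - c) - lam * c) with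
    (a * psi a c + a * psi a (s - c) * (0 - 1) - lam / 2 * (1 * id c + id c * 1)) by (unfold id; field).
  apply derivable_pt_lim_minus; [apply derivable_pt_lim_plus|].
  - apply phi_deriv; auto.
  - apply derivable_pt_lim_comp; [|apply phi_deriv; auto].
    apply dlim_ext with (fct_cte s - id)%F; [|intros; reflexivity].
    apply derivable_pt_lim_minus. apply derivable_pt_lim_const. apply derivable_pt_lim_id.
  - apply derivable_pt_lim_scal. apply derivable_pt_lim_mult; apply derivable_pt_lim_id.
Qed.

Lemma hprime_mono a s lam A B M u v : 1 < a < 2 -> 1 <= M -> (A <= M \/ B <= M) ->
  lam = lamH a * Rpower M (a - 2) -> u < v ->
  Rabs u <= A -> Rabs v <= A -> Rabs (s - u) <= B -> Rabs (s - v) <= B ->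
  a * psi a u - a * psi a (s - u) - lam * u <= a * psi a v - a * psi a (s - v) - lam * v.
Proof.
  intros Ha HM HAB Hlam Huv Hu Hv Hsu Hsv.
  assert (L1 := psi_lower a u v Ha Huv).
  assert (L2 := psi_lower a (s - v) (s - u) Ha ltac:(lra)).
  replace (s - u - (s - v)) with (v - u) in L2 by ring.
  set (mx1 := Rmax (Rabs u) (Rabs v)) in *.
  set (mx2 := Rmax (Rabs (s - v)) (Rabs (s - u))) in *.
  assert (P1 : 0 < mx1).
  { unfold mx1. destruct (Req_dec u 0).
    - apply Rlt_le_trans with (Rabs v); [apply Rabs_pos_lt; lra|apply Rmax_r].
    - apply Rlt_le_trans with (Rabs u); [apply Rabs_pos_lt; auto|apply Rmax_l]. }
  assert (P2 : 0 < mx2).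
  { unfold mx2. destruct (Req_dec (s - v) 0).
    - apply Rlt_le_trans with (Rabs (s - u)); [apply Rabs_pos_lt; lra|apply Rmax_r].
    - apply Rlt_le_trans with (Rabs (s - v)); [apply Rabs_pos_lt; auto|apply Rmax_l]. }
  assert (Q1 : 0 < Rpower mx1 (a - 2)) by apply Rpower_pos.
  assert (Q2 : 0 < Rpower mx2 (a - 2)) by apply Rpower_pos.
  assert (QM : 0 < Rpower M (a - 2)) by apply Rpower_pos.
  assert (Hm : Rpower M (a - 2) <= Rpower mx1 (a - 2) + Rpower mx2 (a - 2)).
  { destruct HAB.
    - assert (mx1 <= M) by (unfold mx1; apply Rmax_lub; lra).
      assert (Rpower M (a - 2) <= Rpower mx1 (a - 2)) by (apply Rpower_base_le_neg; lra). lra.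
    - assert (mx2 <= M) by (unfold mx2; apply Rmax_lub; lra).
      assert (Rpower M (a - 2) <= Rpower mx2 (a - 2)) by (apply Rpower_base_le_neg; lra). lra. }
  assert (T : lam * (v - u) <= a * ((a - 1) / 2 * (v - u) * Rpower mx1 (a - 2))
                + a * ((a - 1) / 2 * (v - u) * Rpower mx2 (a - 2))).
  { rewrite Hlam. unfold lamH.
    replace (a * ((a - 1) / 2 * (v - u) * Rpower mx1 (a - 2)) + a * ((a - 1) / 2 * (v - u) * Rpower mx2 (a - 2)))
      with (a * (a - 1) / 2 * (v - u) * (Rpower mx1 (a - 2) + Rpower mx2 (a - 2))) by field.
    replace (a * (a - 1) / 2 * Rpower M (a - 2) * (v - u)) with (a * (a - 1) / 2 * (v - u) * Rpower M (a - 2)) by ring.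
    apply Rmult_le_compat_l; auto. apply Rmult_le_pos; [|lra]. assert (0 < a * (a-1)) by nra. lra. }
  assert (a * ((a - 1) / 2 * (v - u) * Rpower mx1 (a - 2)) <= a * (psi a v - psi a u))
    by (apply Rmult_le_compat_l; lra).
  assert (a * ((a - 1) / 2 * (v - u) * Rpower mx2 (a - 2)) <= a * (psi a (s - u) - psi a (s - v)))
    by (apply Rmult_le_compat_l; lra).
  lra.
Qed.

Lemma threeH a s x y w A B M c C0 L : 1 < a < 2 -> x < y < w -> 1 <= M -> (A <= M \/ B <= M) ->
  Rabs x <= A -> Rabs w <= A -> Rabs (s - x) <= B -> Rabs (s - w) <= B ->
  Rabs (phi a x + phi a (s - x) - c) <= C0 ->
  Rabs (phi a y + phi a (s - y) - c) <= C0 ->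
  Rabs (phi a w + phi a (s - w) - c) <= C0 ->
  0 < L -> y - x > L -> w - y > L ->
  lamH a * Rpower M (a - 2) * (L * L) < 4 * C0.
Proof.
  intros Ha Hxyw HM HAB Hx Hw Hsx Hsw Fx Fy Fw HL Hp Hq.
  set (lam := lamH a * Rpower M (a - 2)).
  assert (Hlam : 0 < lam).
  { unfold lam, lamH. apply Rmult_lt_0_compat; [|apply Rpower_pos]. assert (0 < a * (a - 1)) by nra. lra. }
  set (h := fun t => phi a t + phi a (s - t) - lam / 2 * (t * t)).
  set (h' := fun t => a * psi a t - a * psi a (s - t) - lam * t).
  assert (Dh : forall t, derivable_pt_lim h t (h' t)) by (intros; apply h_deriv; lra).
  destruct (MVT_cor2 h h' x y) as [e1 [E1 He1]]; [lra|intros; apply Dh|].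
  destruct (MVT_cor2 h h' y w) as [e2 [E2 He2]]; [lra|intros; apply Dh|].
  apply absb in Hx. apply absb in Hw. apply absb in Hsx. apply absb in Hsw.
  assert (Mono : h' e1 <= h' e2).
  { unfold h'. apply (hprime_mono a s lam A B M); auto; try lra; apply absb; lra. }
  apply absb in Fx. apply absb in Fy. apply absb in Fw.
  set (F1 := phi a y + phi a (s - y) - (phi a x + phi a (s - x))).
  set (F2 := phi a w + phi a (s - w) - (phi a y + phi a (s - y))).
  assert (G1 : h' e1 = F1 / (y - x) - lam / 2 * (x + y)).
  { apply (Rmult_eq_reg_r (y - x)); [|lra]. rewrite <- E1. unfold h, F1. field. lra. }
  assert (G2 : h' e2 = F2 / (w - y) - lam / 2 * (y + w)).
  { apply (Rmult_eq_reg_r (w - y)); [|lra]. rewrite <- E2. unfold h, F2. field. lra. }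
  assert (C0p : 0 <= C0) by lra.
  assert (B1 : - F1 / (y - x) <= 2 * C0 / L).
  { unfold Rdiv. apply Rle_trans with (2 * C0 * / (y - x)).
    - apply Rmult_le_compat_r. left; apply Rinv_0_lt_compat; lra. unfold F1; lra.
    - apply Rmult_le_compat_l; [lra|]. apply Rinv_le_contravar; lra. }
  assert (B2 : F2 / (w - y) <= 2 * C0 / L).
  { unfold Rdiv. apply Rle_trans with (2 * C0 * / (w - y)).
    - apply Rmult_le_compat_r. left; apply Rinv_0_lt_compat; lra. unfold F2; lra.
    - apply Rmult_le_compat_l; [lra|]. apply Rinv_le_contravar; lra. }
  assert (K : lam * L < 4 * C0 / L).
  { assert (lam * (w - x) / 2 <= F2 / (w - y) - F1 / (y - x)).
    { rewrite G1, G2 in Mono. lra. }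
    assert (lam * L < lam * (w - x) / 2) by nra.
    unfold Rdiv in *. replace (- F1 * / (y - x)) with (- (F1 * / (y - x))) in B1 by ring. lra. }
  apply (Rmult_lt_compat_r L) in K; auto.
  replace (4 * C0 / L * L) with (4 * C0) in K by (field; lra).
  replace (lam * (L * L)) with (lam * L * L) by ring. exact K.
Qed.

Lemma choose_L r : 0 <= r -> exists L : nat, r <= INR L <= r + 1.
Proof.
  intros Hr. destruct (archimed r) as [H1 H2].
  assert (Hz : (0 < up r)%Z) by (apply lt_IZR; lra).
  exists (Z.to_nat (up r)). rewrite INR_IZR_INZ, Z2Nat.id by lia. lra.
Qed.

Lemma Rpower_cancel M e : 0 < M -> Rpower M e * Rpower M (- e) = 1.
Proof. intros. rewrite <- Rpower_plus. replace (e + - e) with 0 by ring. apply Rpower_O; auto. Qed.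

Lemma IZR_gt_nat x y L : (y - x > Z.of_nat L)%Z -> IZR y - IZR x > INR L.
Proof. intros H. rewrite INR_IZR_INZ, <- minus_IZR. apply IZR_lt. lia. Qed.

Definition KG (a C0 : R) := 4 * C0 / lamG a + 4.

Lemma lamG_pos a : 1 < a < 2 -> 0 < lamG a.
Proof. intros. unfold lamG. apply Rmult_lt_0_compat; [|apply Rpower_pos]. assert (0 < a * (a-1)) by nra. lra. Qed.
Lemma lamH_pos a : 1 < a < 2 -> 0 < lamH a.
Proof. intros. unfold lamH. assert (0 < a * (a-1)) by nra. lra. Qed.

Lemma countG a C0 (l : list Z) (f : Z -> R) (A B : nat) (M : R) (D : Z) (c : R) :
  1 < a < 2 -> 0 < C0 -> NoDup l -> 1 <= M -> (INR A <= M \/ INR B <= M) ->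
  (forall x, 0 <= f x <= 1) ->
  (forall x, 0 < f x -> D <> 0%Z /\ Rabs (IZR x) <= INR A /\ Rabs (IZR x + IZR D) <= INR B /\
      Rabs (phi a (IZR x + IZR D) - phi a (IZR x) - c) <= C0) ->
  gsum l f <= KG a C0 * Rpower M (2 - a).
Proof.
  intros Ha HC ND HM HAB Hf HP.
  assert (Hl := lamG_pos a Ha).
  assert (PM : 0 < Rpower M (2 - a)) by apply Rpower_pos.
  assert (PM1 : 1 <= Rpower M (2 - a)) by (apply Rpower_ge1; lra).
  set (r := 2 * C0 / lamG a * Rpower M (2 - a)).
  assert (Hr : 0 <= r) by (unfold r; apply Rmult_le_pos; [unfold Rdiv; apply Rmult_le_pos; [lra|left; apply Rinv_0_lt_compat; auto]|lra]).
  destruct (choose_L r Hr) as [L [HL1 HL2]].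
  eapply Rle_trans.
  - apply (count3 l f L (fun x => 0 < f x)); auto.
    intros x y w Px Py _ Hxyw Hyx _.
    destruct (HP x Px) as [HD [Hx1 [Hx2 Hx3]]]. destruct (HP y Py) as [_ [Hy1 [Hy2 Hy3]]].
    assert (HD1 : 1 <= Rabs (IZR D)).
    { rewrite <- abs_IZR. apply IZR_le. lia. }
    assert (Hxy : IZR x < IZR y) by (apply IZR_lt; lia).
    assert (G := gapG a (IZR x) (IZR y) (IZR D) (INR A) (INR B) M Ha Hxy HD1 HM HAB Hx1 Hy1 Hx2 Hy2).
    assert (G2 : Rabs (phi a (IZR y + IZR D) - phi a (IZR y) - (phi a (IZR x + IZR D) - phi a (IZR x))) <= 2 * C0).
    { apply absb in Hx3. apply absb in Hy3. apply absb. lra. }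
    assert (Hg := IZR_gt_nat x y L Hyx).
    assert (E : lamG a * Rpower M (a - 2) * r = 2 * C0).
    { unfold r. replace (2 - a) with (- (a - 2)) by ring.
      replace (lamG a * Rpower M (a - 2) * (2 * C0 / lamG a * Rpower M (- (a - 2))))
        with (2 * C0 * (Rpower M (a - 2) * Rpower M (- (a - 2)))) by (field; lra).
      rewrite Rpower_cancel by lra. ring. }
    assert (PM2 : 0 < lamG a * Rpower M (a - 2)) by (apply Rmult_lt_0_compat; auto; apply Rpower_pos).
    assert (lamG a * Rpower M (a - 2) * r < lamG a * Rpower M (a - 2) * (IZR y - IZR x))
      by (apply Rmult_lt_compat_l; lra).
    lra.
  - unfold KG. replace ((4 * C0 / lamG a + 4) * Rpower M (2 - a)) with (2 * r + 4 * Rpower M (2 - a))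
      by (unfold r; field; lra).
    lra.
Qed.

Definition KH (a C0 : R) := 2 * sqrt (4 * C0 / lamH a) + 4.

Lemma countH a C0 (l : list Z) (f : Z -> R) (A B : nat) (M : R) (s : Z) (c : R) :
  1 < a < 2 -> 0 < C0 -> NoDup l -> 1 <= M -> (INR A <= M \/ INR B <= M) ->
  (forall x, 0 <= f x <= 1) ->
  (forall x, 0 < f x -> Rabs (IZR x) <= INR A /\ Rabs (IZR s - IZR x) <= INR B /\
      Rabs (phi a (IZR x) + phi a (IZR s - IZR x) - c) <= C0) ->
  gsum l f <= KH a C0 * Rpower M (1 - a / 2).
Proof.
  intros Ha HC ND HM HAB Hf HP.
  assert (Hl := lamH_pos a Ha).
  assert (PM : 0 < Rpower M (1 - a / 2)) by apply Rpower_pos.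
  assert (PM1 : 1 <= Rpower M (1 - a / 2)) by (apply Rpower_ge1; lra).
  assert (Hq : 0 < 4 * C0 / lamH a) by (unfold Rdiv; apply Rmult_lt_0_compat; [lra|apply Rinv_0_lt_compat; auto]).
  assert (Hsq : 0 < sqrt (4 * C0 / lamH a)) by (apply sqrt_lt_R0; auto).
  set (r := sqrt (4 * C0 / lamH a) * Rpower M (1 - a / 2)).
  assert (Hr : 0 < r) by (unfold r; apply Rmult_lt_0_compat; auto).
  destruct (choose_L r ltac:(lra)) as [L [HL1 HL2]].
  eapply Rle_trans.
  - apply (count3 l f L (fun x => 0 < f x)); auto.
    intros x y w Px Py Pw Hxyw Hyx Hwy.
    destruct (HP x Px) as [Hx1 [Hx2 Hx3]]. destruct (HP y Py) as [Hy1 [Hy2 Hy3]].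
    destruct (HP w Pw) as [Hw1 [Hw2 Hw3]].
    assert (Hxy : IZR x < IZR y < IZR w) by (split; apply IZR_lt; lia).
    assert (G1 := IZR_gt_nat x y L Hyx). assert (G2 := IZR_gt_nat y w L Hwy).
    assert (T := threeH a (IZR s) (IZR x) (IZR y) (IZR w) (INR A) (INR B) M c C0 (INR L)
                  Ha Hxy HM HAB Hx1 Hw1 Hx2 Hw2 Hx3 Hy3 Hw3 ltac:(lra) G1 G2).
    assert (E : lamH a * Rpower M (a - 2) * (r * r) = 4 * C0).
    { unfold r.
      replace (lamH a * Rpower M (a - 2) * (sqrt (4 * C0 / lamH a) * Rpower M (1 - a / 2) *
                (sqrt (4 * C0 / lamH a) * Rpower M (1 - a / 2))))
        with (lamH a * (sqrt (4 * C0 / lamH a) * sqrt (4 * C0 / lamH a)) *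
              (Rpower M (a - 2) * (Rpower M (1 - a / 2) * Rpower M (1 - a / 2)))) by ring.
      rewrite sqrt_sqrt by lra. rewrite <- !Rpower_plus.
      replace (a - 2 + (1 - a / 2 + (1 - a / 2))) with 0 by field.
      rewrite Rpower_O by lra. field. lra. }
    assert (PM2 : 0 < lamH a * Rpower M (a - 2)) by (apply Rmult_lt_0_compat; auto; apply Rpower_pos).
    assert (r * r <= INR L * INR L) by (apply Rmult_le_compat; lra).
    assert (lamH a * Rpower M (a - 2) * (r * r) <= lamH a * Rpower M (a - 2) * (INR L * INR L))
      by (apply Rmult_le_compat_l; lra).
    lra.
  - unfold KH. replace ((2 * sqrt (4 * C0 / lamH a) + 4) * Rpower M (1 - a / 2))
      with (2 * r + 4 * Rpower M (1 - a / 2)) by (unfold r; ring).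
    lra.
Qed.

Section T.
Variables (a C0 m : R) (N N1 N2 N3 : nat).
Hypothesis Ha : 1 < a < 2.
Hypothesis HC : 0 < C0.
Local Notation T := (Tb a C0 m N N1 N2 N3).

Lemma Tb_01 k k1 k2 k3 : 0 <= T k k1 k2 k3 <= 1.
Proof.
  unfold Tb. repeat match goal with |- context [if ?c then _ else _] => destruct c end; lra.
Qed.

Lemma Tb_zero k k1 k2 k3 : k <> (k1 - k2 + k3)%Z -> T k k1 k2 k3 = 0.
Proof. intros H. unfold Tb. destruct (Z.eq_dec k (k1 - k2 + k3)); [contradiction|auto]. Qed.

Lemma zb x M : (Z.abs x <= Z.of_nat M)%Z -> Rabs (IZR x) <= INR M.
Proof. intros H. rewrite <- abs_IZR, INR_IZR_INZ. apply IZR_le; auto. Qed.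

Lemma Tb_pos k k1 k2 k3 : 0 < T k k1 k2 k3 ->
  k = (k1 - k2 + k3)%Z /\ k2 <> k1 /\ k2 <> k3 /\
  Rabs (phi a (IZR k1) - phi a (IZR k2) + phi a (IZR k3) - phi a (IZR k) - m) <= C0 /\
  Rabs (IZR k) <= INR N /\ Rabs (IZR k1) <= INR N1 /\ Rabs (IZR k2) <= INR N2 /\ Rabs (IZR k3) <= INR N3.
Proof.
  intros H. unfold Tb in H.
  destruct (Z.eq_dec k (k1 - k2 + k3)); [|lra].
  destruct (Z.eq_dec k2 k1); [lra|].
  destruct (Z.eq_dec k2 k3); [lra|].
  match type of H with context [Rle_dec ?x _] => destruct (Rle_dec x C0) as [Hr|]; [|lra] end.
  destruct (Z_le_dec (Z.abs k) (Z.of_nat N)); [|lra].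
  destruct (Z_le_dec (Z.abs k1) (Z.of_nat N1)); [|lra].
  destruct (Z_le_dec (Z.abs k2) (Z.of_nat N2)); [|lra].
  destruct (Z_le_dec (Z.abs k3) (Z.of_nat N3)); [|lra].
  unfold phi. rewrite !abs_IZR in Hr.
  repeat split; auto; apply zb; auto.
Qed.

Lemma Tbf01 (g : Z -> Z * Z * Z * Z) x :
  0 <= (let '(k, k1, k2, k3) := g x in T k k1 k2 k3) <= 1.
Proof. destruct (g x) as [[[? ?] ?] ?]. apply Tb_01. Qed.

End T.

Lemma opnorm_mono H L1 L2 L3 L4 X Y : X <= Y -> opnorm2_le H L1 L2 L3 L4 X -> opnorm2_le H L1 L2 L3 L4 Y.
Proof. intros HXY Hn z Hz. eapply Rle_trans; [apply Hn; auto|auto]. Qed.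

Lemma pow2_ge1 n : (1 <= 2 ^ n)%nat.
Proof. induction n; simpl; lia. Qed.

Lemma INR_ge1 n : (1 <= n)%nat -> 1 <= INR n.
Proof. intros H. apply le_INR in H. simpl in H. auto. Qed.

Lemma min_case (p q : nat) : INR p <= INR (Nat.min p q) \/ INR q <= INR (Nat.min p q).
Proof. destruct (Nat.min_spec p q) as [[_ E]|[_ E]]; rewrite E; lra. Qed.

Section B.
Variables (a C0 m : R) (N N1 N2 N3 : nat).
Hypothesis Ha : 1 < a < 2.
Hypothesis HC : 0 < C0.
Hypothesis HN : (1 <= N)%nat.
Hypothesis HN1 : (1 <= N1)%nat.
Hypothesis HN2 : (1 <= N2)%nat.
Hypothesis HN3 : (1 <= N3)%nat.
Local Notation T := (Tb a C0 m N N1 N2 N3).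

Lemma minge1 p q : (1 <= p)%nat -> (1 <= q)%nat -> 1 <= INR (Nat.min p q).
Proof. intros; apply INR_ge1; lia. Qed.

Lemma Hphi E1 E2 : E1 = E2 -> Rabs E2 <= C0 -> Rabs E1 <= C0.
Proof. intros ->; auto. Qed.
Lemma Hphi' E1 E2 : E1 = - E2 -> Rabs E2 <= C0 -> Rabs E1 <= C0.
Proof. intros ->; rewrite Rabs_Ropp; auto. Qed.

Lemma row1 k k1 : zsum (zbox N2) (fun k2 => zsum (zbox N3) (fun k3 => T k k1 k2 k3))
   <= KG a C0 * Rpower (INR (Nat.min N2 N3)) (2 - a).
Proof.
  change (gsum (zbox N2) (fun k2 => gsum (zbox N3) (fun k3 => T k k1 k2 k3)) <= KG a C0 * Rpower (INR (Nat.min N2 N3)) (2 - a)).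
  eapply Rle_trans.
  { apply (gsum_le _ _ (fun k2 => T k k1 k2 (k - k1 + k2)%Z)). intros k2. apply (gsum_single _ _ (k - k1 + k2)%Z).
    apply zbox_NoDup. intros; apply Tb_zero; lia. intros; apply Tb_01. }
  apply (countG a C0 (zbox N2) (fun x => T k k1 x (k - k1 + x)%Z) N2 N3 (INR (Nat.min N2 N3))
           (k - k1) (m - phi a (IZR k1) + phi a (IZR k))); auto.
  - apply zbox_NoDup.
  - apply minge1; auto.
  - apply min_case.
  - intros; apply Tb_01.
  - intros x Hx. destruct (Tb_pos a C0 m N N1 N2 N3 _ _ _ _ Hx) as [E [H1 [H2 [H3 [H4 [H5 [H6 H7]]]]]]].
    assert (ED : IZR x + IZR (k - k1) = IZR (k - k1 + x)) by (repeat rewrite ?plus_IZR, ?minus_IZR; ring).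
    rewrite ED. split; [lia|]. split; auto. split; auto.
    eapply Hphi; [|exact H3]. ring.
Qed.

Lemma col1 k2 k3 : zsum (zbox N) (fun k => zsum (zbox N1) (fun k1 => T k k1 k2 k3))
   <= KG a C0 * Rpower (INR N1) (2 - a).
Proof.
  change (gsum (zbox N) (fun k => gsum (zbox N1) (fun k1 => T k k1 k2 k3)) <= KG a C0 * Rpower (INR N1) (2 - a)).
  eapply Rle_trans.
  { apply (gsum_le _ _ (fun k => T k (k + k2 - k3)%Z k2 k3)). intros k. apply (gsum_single _ (fun k1 => T k k1 k2 k3) (k + k2 - k3)%Z).
    apply zbox_NoDup. intros; apply Tb_zero; lia. intros; apply Tb_01. }
  apply (countG a C0 (zbox N) (fun x => T x (x + k2 - k3)%Z k2 k3) N N1 (INR N1)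
           (k2 - k3) (m + phi a (IZR k2) - phi a (IZR k3))); auto.
  - apply zbox_NoDup.
  - apply INR_ge1; auto.
  - right; lra.
  - intros; apply Tb_01.
  - intros x Hx. destruct (Tb_pos a C0 m N N1 N2 N3 _ _ _ _ Hx) as [E [H1 [H2 [H3 [H4 [H5 [H6 H7]]]]]]].
    assert (ED : IZR x + IZR (k2 - k3) = IZR (x + k2 - k3)) by (repeat rewrite ?plus_IZR, ?minus_IZR; ring).
    rewrite ED. split; [lia|]. split; auto. split; auto.
    eapply Hphi; [|exact H3]. ring.
Qed.

Lemma row2 k k3 : zsum (zbox N1) (fun k1 => zsum (zbox N2) (fun k2 => T k k1 k2 k3))
   <= KG a C0 * Rpower (INR (Nat.min N1 N2)) (2 - a).
Proof.
  change (gsum (zbox N1) (fun k1 => gsum (zbox N2) (fun k2 => T k k1 k2 k3)) <= KG a C0 * Rpower (INR (Nat.min N1 N2)) (2 - a)).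
  eapply Rle_trans.
  { apply (gsum_le _ _ (fun k1 => T k k1 (k1 + k3 - k)%Z k3)). intros k1. apply (gsum_single _ (fun k2 => T k k1 k2 k3) (k1 + k3 - k)%Z).
    apply zbox_NoDup. intros; apply Tb_zero; lia. intros; apply Tb_01. }
  apply (countG a C0 (zbox N1) (fun x => T k x (x + k3 - k)%Z k3) N1 N2 (INR (Nat.min N1 N2))
           (k3 - k) (phi a (IZR k3) - phi a (IZR k) - m)); auto.
  - apply zbox_NoDup.
  - apply minge1; auto.
  - apply min_case.
  - intros; apply Tb_01.
  - intros x Hx. destruct (Tb_pos a C0 m N N1 N2 N3 _ _ _ _ Hx) as [E [H1 [H2 [H3 [H4 [H5 [H6 H7]]]]]]].
    assert (ED : IZR x + IZR (k3 - k) = IZR (x + k3 - k)) by (repeat rewrite ?plus_IZR, ?minus_IZR; ring).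
    rewrite ED. split; [lia|]. split; auto. split; auto.
    eapply Hphi'; [|exact H3]. ring.
Qed.

Lemma col2 k1 k2 : zsum (zbox N) (fun k => zsum (zbox N3) (fun k3 => T k k1 k2 k3))
   <= KG a C0 * Rpower (INR N3) (2 - a).
Proof.
  change (gsum (zbox N) (fun k => gsum (zbox N3) (fun k3 => T k k1 k2 k3)) <= KG a C0 * Rpower (INR N3) (2 - a)).
  eapply Rle_trans.
  { apply (gsum_le _ _ (fun k => T k k1 k2 (k - k1 + k2)%Z)). intros k. apply (gsum_single _ (fun k3 => T k k1 k2 k3) (k - k1 + k2)%Z).
    apply zbox_NoDup. intros; apply Tb_zero; lia. intros; apply Tb_01. }
  apply (countG a C0 (zbox N) (fun x => T x k1 k2 (x - k1 + k2)%Z) N N3 (INR N3)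
           (k2 - k1) (m - phi a (IZR k1) + phi a (IZR k2))); auto.
  - apply zbox_NoDup.
  - apply INR_ge1; auto.
  - right; lra.
  - intros; apply Tb_01.
  - intros x Hx. destruct (Tb_pos a C0 m N N1 N2 N3 _ _ _ _ Hx) as [E [H1 [H2 [H3 [H4 [H5 [H6 H7]]]]]]].
    assert (ED : IZR x + IZR (k2 - k1) = IZR (x - k1 + k2)) by (repeat rewrite ?plus_IZR, ?minus_IZR; ring).
    rewrite ED. split; [lia|]. split; auto. split; auto.
    eapply Hphi; [|exact H3]. ring.
Qed.

Lemma row3 k k2 : zsum (zbox N1) (fun k1 => zsum (zbox N3) (fun k3 => T k k1 k2 k3))
   <= KH a C0 * Rpower (INR (Nat.min N1 N3)) (1 - a / 2).
Proof.
  change (gsum (zbox N1) (fun k1 => gsum (zbox N3) (fun k3 => T k k1 k2 k3)) <= KH a C0 * Rpower (INR (Nat.min N1 N3)) (1 - a / 2)).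
  eapply Rle_trans.
  { apply (gsum_le _ _ (fun k1 => T k k1 k2 (k - k1 + k2)%Z)). intros k1. apply (gsum_single _ (fun k3 => T k k1 k2 k3) (k - k1 + k2)%Z).
    apply zbox_NoDup. intros; apply Tb_zero; lia. intros; apply Tb_01. }
  apply (countH a C0 (zbox N1) (fun x => T k x k2 (k - x + k2)%Z) N1 N3 (INR (Nat.min N1 N3))
           (k + k2) (phi a (IZR k2) + phi a (IZR k) + m)); auto.
  - apply zbox_NoDup.
  - apply minge1; auto.
  - apply min_case.
  - intros; apply Tb_01.
  - intros x Hx. destruct (Tb_pos a C0 m N N1 N2 N3 _ _ _ _ Hx) as [E [H1 [H2 [H3 [H4 [H5 [H6 H7]]]]]]].
    assert (ED : IZR (k + k2) - IZR x = IZR (k - x + k2)) by (repeat rewrite ?plus_IZR, ?minus_IZR; ring).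
    rewrite ED. split; auto. split; auto.
    eapply Hphi; [|exact H3]. ring.
Qed.

Lemma col3 k1 k3 : zsum (zbox N) (fun k => zsum (zbox N2) (fun k2 => T k k1 k2 k3))
   <= KH a C0 * Rpower (INR (Nat.min N N2)) (1 - a / 2).
Proof.
  change (gsum (zbox N) (fun k => gsum (zbox N2) (fun k2 => T k k1 k2 k3)) <= KH a C0 * Rpower (INR (Nat.min N N2)) (1 - a / 2)).
  eapply Rle_trans.
  { apply (gsum_le _ _ (fun k => T k k1 (k1 + k3 - k)%Z k3)). intros k. apply (gsum_single _ (fun k2 => T k k1 k2 k3) (k1 + k3 - k)%Z).
    apply zbox_NoDup. intros; apply Tb_zero; lia. intros; apply Tb_01. }
  apply (countH a C0 (zbox N) (fun x => T x k1 (k1 + k3 - x)%Z k3) N N2 (INR (Nat.min N N2))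
           (k1 + k3) (phi a (IZR k1) + phi a (IZR k3) - m)); auto.
  - apply zbox_NoDup.
  - apply minge1; auto.
  - apply min_case.
  - intros; apply Tb_01.
  - intros x Hx. destruct (Tb_pos a C0 m N N1 N2 N3 _ _ _ _ Hx) as [E [H1 [H2 [H3 [H4 [H5 [H6 H7]]]]]]].
    assert (ED : IZR (k1 + k3) - IZR x = IZR (k1 + k3 - x)) by (repeat rewrite ?plus_IZR, ?minus_IZR; ring).
    rewrite ED. split; auto. split; auto.
    eapply Hphi'; [|exact H3]. ring.
Qed.

End B.

Lemma final_mono K K' P Q : 0 < P -> 0 < Q -> (K * P) * (K * Q) <= (K * K + K' * K') * (P * Q).
Proof. intros. assert (0 <= K' * K' * (P * Q)) by (apply Rmult_le_pos; [nra|nra]). nra. Qed.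

Theorem lemma2p13 :
  forall alpha C0 : R, 1 < alpha < 2 -> 0 < C0 ->
  exists C : R, 0 < C /\
  forall (n n1 n2 n3 : nat) (m : R),
    (n1 <= n)%nat -> (n2 <= n)%nat -> (n3 <= n)%nat ->
    let N := (2 ^ n)%nat in
    let N1 := (2 ^ n1)%nat in
    let N2 := (2 ^ n2)%nat in
    let N3 := (2 ^ n3)%nat in
    let T := Tb alpha C0 m N N1 N2 N3 in
    (* || T ||^2_{k k1 -> k2 k3} *)
    opnorm2_le (fun k k1 k2 k3 => T k k1 k2 k3)
      (zbox N) (zbox N1) (zbox N2) (zbox N3)
      (C * (Rpower (INR (Nat.min N2 N3)) (2 - alpha) * Rpower (INR N1) (2 - alpha)))
    /\
    (* || T ||^2_{k k3 -> k1 k2} *)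
    opnorm2_le (fun k k3 k1 k2 => T k k1 k2 k3)
      (zbox N) (zbox N3) (zbox N1) (zbox N2)
      (C * (Rpower (INR (Nat.min N1 N2)) (2 - alpha) * Rpower (INR N3) (2 - alpha)))
    /\
    (* || T ||^2_{k k2 -> k1 k3} *)
    opnorm2_le (fun k k2 k1 k3 => T k k1 k2 k3)
      (zbox N) (zbox N2) (zbox N1) (zbox N3)
      (C * (Rpower (INR (Nat.min N1 N3)) (1 - alpha / 2)
            * Rpower (INR (Nat.min N N2)) (1 - alpha / 2))).
Proof.
  intros alpha C0 Ha HC.
  assert (KGp : 0 < KG alpha C0).
  { unfold KG. assert (0 < 4 * C0 / lamG alpha).
    { unfold Rdiv. apply Rmult_lt_0_compat; [lra|]. apply Rinv_0_lt_compat, lamG_pos; auto. }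
    lra. }
  assert (KHp : 0 < KH alpha C0).
  { unfold KH. assert (0 <= sqrt (4 * C0 / lamH alpha)) by apply sqrt_pos. lra. }
  exists (KG alpha C0 * KG alpha C0 + KH alpha C0 * KH alpha C0). split; [nra|].
  intros n n1 n2 n3 m H1 H2 H3. cbv zeta.
  assert (G := pow2_ge1 n). assert (G1 := pow2_ge1 n1).
  assert (G2 := pow2_ge1 n2). assert (G3 := pow2_ge1 n3).
  set (N := (2 ^ n)%nat) in *. set (N1 := (2 ^ n1)%nat) in *.
  set (N2 := (2 ^ n2)%nat) in *. set (N3 := (2 ^ n3)%nat) in *.
  split; [|split].
  - eapply opnorm_mono; [|apply (schur _ _ _ _ _
        (KG alpha C0 * Rpower (INR (Nat.min N2 N3)) (2 - alpha))
        (KG alpha C0 * Rpower (INR N1) (2 - alpha)))].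
    + apply final_mono; apply Rpower_pos.
    + intros; apply Tb_01.
    + left; apply Rmult_lt_0_compat; auto; apply Rpower_pos.
    + left; apply Rmult_lt_0_compat; auto; apply Rpower_pos.
    + intros; apply row1; auto.
    + intros; apply col1; auto.
  - eapply opnorm_mono; [|apply (schur _ _ _ _ _
        (KG alpha C0 * Rpower (INR (Nat.min N1 N2)) (2 - alpha))
        (KG alpha C0 * Rpower (INR N3) (2 - alpha)))].
    + apply final_mono; apply Rpower_pos.
    + intros; apply Tb_01.
    + left; apply Rmult_lt_0_compat; auto; apply Rpower_pos.
    + left; apply Rmult_lt_0_compat; auto; apply Rpower_pos.
    + intros; apply row2; auto.
    + intros; apply col2; auto.
  - eapply opnorm_mono; [|apply (schur _ _ _ _ _
        (KH alpha C0 * Rpower (INR (Nat.min N1 N3)) (1 - alpha / 2))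
        (KH alpha C0 * Rpower (INR (Nat.min N N2)) (1 - alpha / 2)))].
    + rewrite Rplus_comm. apply final_mono; apply Rpower_pos.
    + intros; apply Tb_01.
    + left; apply Rmult_lt_0_compat; auto; apply Rpower_pos.
    + left; apply Rmult_lt_0_compat; auto; apply Rpower_pos.
    + intros; apply row3; auto.
    + intros; apply col3; auto.
Qed.
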